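(* Let $n=2$ and let $(X,\mathbf h,\Lambda,\widetilde B)$ be a quantum seed with $b_{12}\neq0$, and let $X'_1$, $X'_2$ be the corresponding cluster variables of $\mu_1(X,\mathbf h,\Lambda,\widetilde B)$ and $\mu_2(X,\mathbf h,\Lambda,\widetilde B)$. Then $$\mathbb{ZP}[X_1,X'_1,X_2^{\pm1}]=\mathbb{ZP}[X_1,X'_1,X_2,X'_2]+\mathbb{ZP}[X_1,X_2^{\pm1}].$$
   Context: Notation: $[a,b]=\{a,a+1,\dots,b\}$; $[x]_+=\max(x,0)$, applied entrywise to vectors; $e_1,\dots,e_m$ is the standard basis of $\mathbb Z^m$. Fix integers $m\ge n\ge 1$. A compatible pair $(\Lambda,\widetilde B)$ consists of an $m\times n$ integer matrix $\widetilde B=(b_{kl})$ and a skew-symmetric $m\times m$ integer matrix $\Lambda$ such that $\Lambda\widetilde B=-\begin{bmatrix}D\\0\end{bmatrix}$ for some $D=\mathrm{diag}(\tilde d_1,\dots,\tilde d_n)$ with all $\tilde d_k\in\mathbb Z_{>0}$. Write $\Lambda(a,b)=a^T\Lambda b$. Fix positive integers $d_1,\dots,d_n$ such that $d_k$ divides every entry of the $k$-th column $b^k$ of $\widetilde B$; $\beta^k=\frac1{d_k}b^k$. The quantum torus $\mathcal T(\Lambda)$ is the $\mathbb Z[q^{\pm1/2}]$-algebra with basis $\{X(c)\mid c\in\mathbb Z^m\}$ and multiplication $X(c)X(d)=q^{\frac12\Lambda(c,d)}X(c+d)$; $\mathcal F$ is its skew field of fractions, $X_k=X(e_k)$. For $k\in[1,n]$,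 $\mathbf h_k=(h_{k,0},\dots,h_{k,d_k})$ with $h_{k,r}\in\mathbb Z[q^{\pm1/2}]$, $h_{k,r}=h_{k,d_k-r}$, $h_{k,0}=h_{k,d_k}=1$. A quantum seed $(X,\mathbf h,\Lambda,\widetilde B)$ consists of these data and the map $X:c\mapsto X(c)$. Its mutation in direction $i$ has cluster variables $X'_k=X_k$ for $k\ne i$ and $X'_i=\sum_{r=0}^{d_i}h_{i,r}X(r[\beta^i]_++(d_i-r)[-\beta^i]_+-e_i)$. $\mathbb{ZP}$ is the ring of Laurent polynomials in $X_{n+1},\dots,X_m$ with coefficients in $\mathbb Z[q^{\pm1/2}]$; for $Y_1,\dots,Y_s\in\mathcal F$, $\mathbb{ZP}[Y_1,\dots,Y_s]$ is the subring of $\mathcal F$ generated by $\mathbb{ZP}$ and the $Y_k$ (exponent $\pm1$ means both $Y$ and $Y^{-1}$ are adjoined). The sum of two such subrings means the set of sums of elements (an additive subgroup of $\mathcal F$). *)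

(* Defs.v *)
From mathcomp Require Import all_boot all_order all_algebra.
Set Implicit Arguments. Unset Strict Implicit. Unset Printing Implicit Defensive.
Import Order.TTheory GRing.Theory Num.Theory.
Local Open Scope ring_scope.

(* Rank 2 (n = 2), total number of variables m = 2 + p (so m >= n = 2).
   Index (mut k) for k : 'I_2 is the mutable variable X_{k+1};
   indices >= 2 are frozen. t stands for q^{1/2}. *)

Definition mut (p : nat) (k : 'I_2) : 'I_(2 + p) := lshift p k.

Notation expv p := 'rV[int]_(2 + p).

Definition lam (p : nat) (L : 'M[int]_(2 + p)) (c d : expv p) : int :=
  (c *m L *m d^T) 0 0.

(* Elements of Z[q^{±1/2}] are given by finite lists of terms (a, e)
   meaning a * t^e (t = q^{1/2}); they are compared via coefficients. *)
Definition LP := seq (int * int).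
Definition lpcoef (l : LP) (e : int) : int := \sum_(u <- l | u.2 == e) u.1.

(* Elements of the quantum torus T(Lambda) are given by finite lists of terms
   ((a, e), c) meaning a * t^e * X(c).  The actual element of the torus is
   its coefficient function  c, e |-> coefficient of t^e X(c)  (the basis
   {t^e X(c)} of T(Lambda) as a Z-module). *)
Definition Poly (p : nat) := seq ((int * int) * expv p).

Definition coef (p : nat) (P : Poly p) : expv p -> int -> int :=
  fun c e => \sum_(u <- P | (u.2 == c) && (u.1.2 == e)) u.1.1.

Definition padd (p : nat) (P Q : Poly p) : Poly p := P ++ Q.
Definition popp (p : nat) (P : Poly p) : Poly p :=
  [seq ((- u.1.1, u.1.2), u.2) | u <- P].
(* X(c) X(d) = q^{Lambda(c,d)/2} X(c+d) = t^{Lambda(c,d)} X(c+d) *)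
Definition pmul (p : nat) (L : 'M[int]_(2 + p)) (P Q : Poly p) : Poly p :=
  [seq ((u.1.1 * v.1.1, u.1.2 + v.1.2 + lam L u.2 v.2), u.2 + v.2)
  | u <- P, v <- Q].

Definition Xmon (p : nat) (c : expv p) : Poly p := [:: ((1, 0), c)].
Definition ev (p : nat) (i : 'I_(2 + p)) : expv p :=
  \row_j (if j == i then 1 else 0).

Inductive gen (p : nat) (L : 'M[int]_(2 + p)) (G : Poly p -> Prop)
  : Poly p -> Prop :=
| gen_base P : G P -> gen L G P
| gen_add P Q : gen L G P -> gen L G Q -> gen L G (padd P Q)
| gen_opp P : gen L G P -> gen L G (popp P)
| gen_mul P Q : gen L G P -> gen L G Q -> gen L G (pmul L P Q).

Definition InRing (p : nat) (L : 'M[int]_(2 + p)) (G : Poly p -> Prop)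
  (f : expv p -> int -> int) : Prop :=
  exists P, gen L G P /\ coef P = f.

(* ZP is additively generated by the terms a t^e X(c) with c supported on
   the frozen indices; so ZP[Y_1..Y_s] is the subring generated by these
   terms together with the Y's. *)
Definition ZPterm (p : nat) (P : Poly p) : Prop :=
  exists a e (c : expv p),
    P = [:: ((a, e), c)] /\ forall k : 'I_2, c 0 (mut p k) = 0.

Definition beta (p : nat) (B : 'M[int]_(2 + p, 2)) (d : 'I_2 -> nat)
  (k : 'I_2) (j : 'I_(2 + p)) : int := (B j k %/ (d k)%:Z)%Z.

Definition mutexp (p : nat) (B : 'M[int]_(2 + p, 2)) (d : 'I_2 -> nat)
  (k : 'I_2) (r : nat) : expv p :=
  \row_j (r%:Z * Num.max (beta B d k j) 0
          + (d k - r)%:Z * Num.max (- beta B d k j) 0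
          - (if j == mut p k then 1 else 0)).

Definition Xprime (p : nat) (B : 'M[int]_(2 + p, 2)) (d : 'I_2 -> nat)
  (h : 'I_2 -> nat -> LP) (k : 'I_2) : Poly p :=
  flatten [seq [seq ((u.1, u.2), mutexp B d k r) | u <- h k r]
          | r <- iota 0 (d k).+1].

Definition quantum_seed (p : nat) (L : 'M[int]_(2 + p)) (B : 'M[int]_(2 + p, 2))
  (d : 'I_2 -> nat) (h : 'I_2 -> nat -> LP) : Prop :=
  [/\ L^T = - L,
      exists dt : 'I_2 -> int, (forall k, 0 < dt k) /\
        L *m B = - col_mx (diag_mx (\row_k dt k)) (0 : 'M[int]_(p, 2)),
      forall k, (0 < d k)%N,
      forall k (j : 'I_(2 + p)), ((d k)%:Z %| B j k)%Z &
      forall k, [/\ forall r, (r <= d k)%N ->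
                      lpcoef (h k r) = lpcoef (h k (d k - r)%N),
                    lpcoef (h k 0%N) = lpcoef [:: (1, 0)] &
                    lpcoef (h k (d k)) = lpcoef [:: (1, 0)]]].

(* Main.v *)
Require Import Defs.
From mathcomp Require Import all_boot all_order all_algebra.
From mathcomp Require Import zify ring lra.
From Stdlib Require Import FunctionalExtensionality.
Import Defs.
Set Implicit Arguments. Unset Strict Implicit. Unset Printing Implicit Defensive.
Import Order.TTheory GRing.Theory Num.Theory.
Local Open Scope ring_scope.

Definition scal (p : nat) (a e : int) (P : Poly p) : Poly p :=
  [seq ((a * u.1.1, e + u.1.2), u.2) | u <- P].

Lemma coef_cat p (A B : Poly p) c e : coef (A ++ B) c e = coef A c e + coef B c e.
Proof. by rewrite /coef big_cat. Qed.

Lemma coef_popp p (A : Poly p) c e : coef (popp A) c e = - coef A c e.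
Proof. by rewrite /coef /popp big_map sumrN. Qed.

Lemma coef_perm p (A B : Poly p) c e : perm_eq A B -> coef A c e = coef B c e.
Proof. by move=> H; rewrite /coef (perm_big _ H). Qed.

Lemma coef_nil p c e : coef ([::] : Poly p) c e = 0.
Proof. by rewrite /coef big_nil. Qed.

Lemma coef_scal p a e0 (P : Poly p) c e :
  coef (scal a e0 P) c e = a * coef P c (e - e0).
Proof.
rewrite /coef /scal big_map /= big_distrr /=. apply: eq_big => u //=.
congr andb. apply/eqP/eqP => H; lia.
Qed.

Lemma coef_pmul_r p L (P A : Poly p) c e :
  coef (pmul L P A) c e =
  \sum_(u <- P) u.1.1 * coef A (c - u.2) (e - u.1.2 - lam L u.2 (c - u.2)).
Proof.
rewrite /coef /pmul big_mkcond big_allpairs_dep /=. apply: eq_bigr => u _.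
rewrite big_distrr /= [in RHS]big_mkcond /=. apply: eq_bigr => v _.
have -> : (u.2 + v.2 == c) = (v.2 == c - u.2).
  by apply/eqP/eqP => [<-|->]; rewrite (addrC u.2) ?addrK ?subrK.
case: eqP => // Hv. rewrite /= -Hv.
have -> : (u.1.2 + v.1.2 + lam L u.2 v.2 == e) =
   (v.1.2 == e - u.1.2 - lam L u.2 v.2).
  by apply/eqP/eqP => H; [rewrite -H | rewrite H]; ring.
by case: ifP.
Qed.

Lemma coef_pmul_l p L (P A : Poly p) c e :
  coef (pmul L P A) c e =
  \sum_(v <- A) v.1.1 * coef P (c - v.2) (e - v.1.2 - lam L (c - v.2) v.2).
Proof.
rewrite /coef /pmul big_mkcond big_allpairs_dep /= exchange_big /=.
apply: eq_bigr => v _.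
rewrite big_distrr /= [in RHS]big_mkcond /=. apply: eq_bigr => u _.
have -> : (u.2 + v.2 == c) = (u.2 == c - v.2).
  by apply/eqP/eqP => [<-|->]; rewrite ?addrK ?subrK.
case: eqP => // Hv. rewrite /= -Hv.
have -> : (u.1.2 + v.1.2 + lam L u.2 v.2 == e) =
   (u.1.2 == e - v.1.2 - lam L u.2 v.2).
  by apply/eqP/eqP => H; [rewrite -H | rewrite H]; ring.
by case: ifP => _; rewrite ?mulr0 // mulrC.
Qed.
Lemma lam0l p (L : 'M[int]_(2+p)) d : lam L 0 d = 0.
Proof. by rewrite /lam !mul0mx mxE. Qed.
Lemma lam0r p (L : 'M[int]_(2+p)) c : lam L c 0 = 0.
Proof. by rewrite /lam trmx0 mulmx0 mxE. Qed.
Lemma lamDl p (L : 'M[int]_(2+p)) c c' d : lam L (c + c') d = lam L c d + lam L c' d.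
Proof. by rewrite /lam !mulmxDl mxE. Qed.
Lemma lamDr p (L : 'M[int]_(2+p)) c d d' : lam L c (d + d') = lam L c d + lam L c d'.
Proof. by rewrite /lam linearD /= mulmxDr mxE. Qed.
Lemma lamNl p (L : 'M[int]_(2+p)) c d : lam L (- c) d = - lam L c d.
Proof. by rewrite /lam !mulNmx mxE. Qed.
Lemma lamNr p (L : 'M[int]_(2+p)) c d : lam L c (- d) = - lam L c d.
Proof. by rewrite /lam linearN /= mulmxN mxE. Qed.
Lemma lamBr p (L : 'M[int]_(2+p)) c d d' : lam L c (d - d') = lam L c d - lam L c d'.
Proof. by rewrite lamDr lamNr. Qed.
Lemma lamBl p (L : 'M[int]_(2+p)) c c' d : lam L (c - c') d = lam L c d - lam L c' d.
Proof. by rewrite lamDl lamNl. Qed.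
Lemma lam_skew p (L : 'M[int]_(2+p)) c d : L^T = - L -> lam L c d = - lam L d c.
Proof.
move=> HL. rewrite /lam -[in LHS](trmxK (c *m L *m d^T)) mxE.
by rewrite !trmx_mul trmxK HL mulNmx mulmxN mulmxA mxE.
Qed.
Definition fm p (L : 'M[int]_(2+p)) (u v : (int * int) * expv p) :=
  ((u.1.1 * v.1.1, u.1.2 + v.1.2 + lam L u.2 v.2), u.2 + v.2).

Lemma pmul_cons p L u (A Q : Poly p) :
  pmul L (u :: A) Q = map (fm L u) Q ++ pmul L A Q.
Proof. by []. Qed.

Lemma pmul_catl p L (A B Q : Poly p) : pmul L (A ++ B) Q = pmul L A Q ++ pmul L B Q.
Proof. by rewrite /pmul allpairs_cat. Qed.

Lemma pmul_nilr p L (A : Poly p) : pmul L A [::] = [::].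
Proof. by elim: A. Qed.

Lemma perm_pmul_catr p L (P A B : Poly p) :
  perm_eq (pmul L P (A ++ B)) (pmul L P A ++ pmul L P B).
Proof. apply/permPl; exact: perm_allpairs_catr. Qed.

Lemma perm_pmulr p L (P A B : Poly p) :
  perm_eq A B -> perm_eq (pmul L P A) (pmul L P B).
Proof. by move=> H; apply: perm_allpairs. Qed.

Lemma perm_pmull p L (P A B : Poly p) :
  perm_eq A B -> perm_eq (pmul L A P) (pmul L B P).
Proof. by move=> H; apply: perm_allpairs. Qed.

Lemma fm_assoc p L (u v w : (int * int) * expv p) :
  fm L (fm L u v) w = fm L u (fm L v w).
Proof.
case: u => [[a e] c]; case: v => [[a' e'] c']; case: w => [[a'' e''] c''].
rewrite /fm /= lamDl lamDr mulrA addrA. congr (_, _, _); first ring. by rewrite addrA.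
Qed.

Lemma pmul_map_l p L u (Q R : Poly p) :
  pmul L (map (fm L u) Q) R = map (fm L u) (pmul L Q R).
Proof.
elim: Q => //= v Q IH. rewrite pmul_cons IH map_cat -map_comp.
congr (_ ++ _). apply: eq_map => w /=. by rewrite fm_assoc.
Qed.

Lemma pmul_assoc p L (P Q R : Poly p) :
  pmul L (pmul L P Q) R = pmul L P (pmul L Q R).
Proof.
elim: P => //= u P IH. by rewrite pmul_cons pmul_catl IH pmul_map_l.
Qed.
Lemma scal_cat p a e (A B : Poly p) : scal a e (A ++ B) = scal a e A ++ scal a e B.
Proof. by rewrite /scal map_cat. Qed.

Lemma scal_scal p a e a' e' (P : Poly p) :
  scal a e (scal a' e' P) = scal (a * a') (e + e') P.
Proof. rewrite /scal -map_comp; apply: eq_map => u /=. by rewrite !mulrA !addrA. Qed.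

Lemma scal10 p (P : Poly p) : scal 1 0 P = P.
Proof. rewrite /scal; elim: P => //= [[[a e] c] P] ->. by rewrite mul1r add0r. Qed.

Lemma popp_scal p (P : Poly p) : popp P = scal (-1) 0 P.
Proof. rewrite /popp /scal; apply: eq_map => u. by rewrite mulN1r add0r. Qed.

Lemma scal_pmul_l p L a e (P Q : Poly p) :
  pmul L (scal a e P) Q = scal a e (pmul L P Q).
Proof.
elim: P => //= u P IH. rewrite !pmul_cons IH scal_cat. congr (_ ++ _).
rewrite /scal -map_comp; apply: eq_map => v /=. rewrite /fm /=.
by rewrite mulrA !addrA.
Qed.

Lemma scal_pmul_r p L a e (P Q : Poly p) :
  pmul L P (scal a e Q) = scal a e (pmul L P Q).
Proof.
elim: P => //= u P IH. rewrite !pmul_cons IH scal_cat. congr (_ ++ _).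
rewrite /scal -!map_comp; apply: eq_map => v /=. rewrite /fm /=.
congr (_, _, _); ring.
Qed.

Lemma pmul_Xmon0l p L (P : Poly p) : pmul L (Xmon 0) P = P.
Proof.
rewrite pmul_cons cats0. elim: P => //= [[[a e] c] P] ->.
by rewrite /fm /= mul1r add0r lam0l addr0 add0r.
Qed.

Lemma pmul_Xmon0r p L (P : Poly p) : pmul L P (Xmon 0) = P.
Proof.
elim: P => //= [[[a e] c] P] IH. rewrite pmul_cons IH /=.
by rewrite /fm /= mulr1 addr0 lam0r addr0 addr0.
Qed.

Lemma pmul_Xmon p L (c d : expv p) :
  pmul L (Xmon c) (Xmon d) = scal 1 (lam L c d) (Xmon (c + d)).
Proof. by rewrite /pmul /Xmon /scal /= /fm /= mulr1 add0r addr0. Qed.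

Lemma single_scal p a e (c : expv p) : [:: ((a, e), c)] = scal a e (Xmon c).
Proof. by rewrite /scal /Xmon /= mulr1 addr0. Qed.

Lemma pmul_scalarl p L a e (P : Poly p) : pmul L [:: ((a, e), 0)] P = scal a e P.
Proof.
rewrite pmul_cons cats0 /scal; apply: eq_map => v. by rewrite /fm /= lam0l addr0 add0r.
Qed.

Lemma pmul_scalarr p L a e (P : Poly p) : pmul L P [:: ((a, e), 0)] = scal a e P.
Proof.
elim: P => //= u P IH. rewrite pmul_cons IH /=.
by rewrite /fm /= lam0r addr0 addr0 mulrC addrC.
Qed.

Lemma pmul_poppl p L (P Q : Poly p) : pmul L (popp P) Q = popp (pmul L P Q).
Proof. by rewrite !popp_scal scal_pmul_l. Qed.
Lemma pmul_poppr p L (P Q : Poly p) : pmul L P (popp Q) = popp (pmul L P Q).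
Proof. by rewrite !popp_scal scal_pmul_r. Qed.

Lemma coef_Xmon p (z c : expv p) e :
  coef (Xmon z) c e = if (z == c) && (0 == e) then 1 else 0.
Proof. by rewrite /coef /Xmon big_cons big_nil /= addr0. Qed.
Lemma pmul_cong p L (A A' B B' : Poly p) :
  (forall c e, coef A c e = coef A' c e) -> (forall c e, coef B c e = coef B' c e) ->
  forall c e, coef (pmul L A B) c e = coef (pmul L A' B') c e.
Proof.
move=> HA HB c e. rewrite coef_pmul_r.
under eq_bigr => u _ do rewrite HB. rewrite -coef_pmul_r coef_pmul_l.
under eq_bigr => u _ do rewrite HA. by rewrite -coef_pmul_l.
Qed.

Definition Rg p L (G : Poly p -> Prop) (P : Poly p) :=
  exists P', gen L G P' /\ forall c e, coef P' c e = coef P c e.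

Lemma Rg_base p L (G : Poly p -> Prop) P : G P -> Rg L G P.
Proof. by move=> H; exists P; split => //; apply: gen_base. Qed.

Lemma Rg_coef p L (G : Poly p -> Prop) P Q :
  Rg L G P -> (forall c e, coef P c e = coef Q c e) -> Rg L G Q.
Proof. by case=> P' [H1 H2] H; exists P'; split => // c e; rewrite H2 H. Qed.

Lemma Rg_perm p L (G : Poly p -> Prop) P Q : Rg L G P -> perm_eq P Q -> Rg L G Q.
Proof. by move=> H1 H2; apply: (Rg_coef H1) => c e; apply: coef_perm. Qed.

Lemma Rg_cat p L (G : Poly p -> Prop) P Q : Rg L G P -> Rg L G Q -> Rg L G (P ++ Q).
Proof.
case=> P' [H1 H2] [Q' [H3 H4]]; exists (padd P' Q'); split; first exact: gen_add.
by move=> c e; rewrite /padd !coef_cat H2 H4.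
Qed.

Lemma Rg_popp p L (G : Poly p -> Prop) P : Rg L G P -> Rg L G (popp P).
Proof.
case=> P' [H1 H2]; exists (popp P'); split; first exact: gen_opp.
by move=> c e; rewrite !coef_popp H2.
Qed.

Lemma Rg_mul p L (G : Poly p -> Prop) P Q : Rg L G P -> Rg L G Q -> Rg L G (pmul L P Q).
Proof.
case=> P' [H1 H2] [Q' [H3 H4]]; exists (pmul L P' Q'); split; first exact: gen_mul.
exact: pmul_cong.
Qed.

Lemma ZPterm_scalar p a e : ZPterm [:: ((a, e), (0 : expv p))].
Proof. by exists a, e, 0; split => // k; rewrite mxE. Qed.

Lemma Rg_scal p L (G : Poly p -> Prop) a e P :
  (forall P, ZPterm P -> G P) -> Rg L G P -> Rg L G (scal a e P).
Proof.
move=> HZ H; rewrite -(pmul_scalarl L); apply: Rg_mul => //.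
by apply: Rg_base; apply: HZ; apply: ZPterm_scalar.
Qed.

Lemma Rg_zero p L (G : Poly p -> Prop) :
  (forall P, ZPterm P -> G P) -> Rg L G [:: ((0, 0), 0)].
Proof. by move=> HZ; apply: Rg_base; apply: HZ; apply: ZPterm_scalar. Qed.

Lemma coef_zero p (c : expv p) e : coef [:: ((0, 0), 0)] c e = 0.
Proof. by rewrite /coef big_cons big_nil; case: ifP. Qed.

Lemma Rg_nil p L (G : Poly p -> Prop) :
  (forall P, ZPterm P -> G P) -> Rg L G [::].
Proof. by move=> HZ; apply: (Rg_coef (Rg_zero L HZ)) => c e; rewrite coef_zero coef_nil. Qed.

Definition Msum p L (G1 G2 : Poly p -> Prop) (P : Poly p) :=
  exists P1 P2, Rg L G1 P1 /\ Rg L G2 P2 /\ forall c e, coef P c e = coef (P1 ++ P2) c e.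

Lemma Msum_coef p L (G1 G2 : Poly p -> Prop) P Q :
  Msum L G1 G2 P -> (forall c e, coef P c e = coef Q c e) -> Msum L G1 G2 Q.
Proof. by case=> P1 [P2 [H1 [H2 H3]]] H; exists P1, P2; do 2!split => //; move=> c e; rewrite -H. Qed.

Lemma Msum_perm p L (G1 G2 : Poly p -> Prop) P Q :
  Msum L G1 G2 P -> perm_eq P Q -> Msum L G1 G2 Q.
Proof. by move=> H1 H2; apply: (Msum_coef H1) => c e; apply: coef_perm. Qed.

Lemma Msum_cat p L (G1 G2 : Poly p -> Prop) P Q :
  Msum L G1 G2 P -> Msum L G1 G2 Q -> Msum L G1 G2 (P ++ Q).
Proof.
case=> P1 [P2 [H1 [H2 H3]]] [Q1 [Q2 [H4 [H5 H6]]]].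
exists (P1 ++ Q1), (P2 ++ Q2); split; first exact: Rg_cat.
split; first exact: Rg_cat.
move=> c e; rewrite !coef_cat H3 H6 !coef_cat. ring.
Qed.

Lemma Msum_scal p L (G1 G2 : Poly p -> Prop) a e P :
  (forall P, ZPterm P -> G1 P) -> (forall P, ZPterm P -> G2 P) ->
  Msum L G1 G2 P -> Msum L G1 G2 (scal a e P).
Proof.
move=> HZ1 HZ2 [P1 [P2 [H1 [H2 H3]]]].
exists (scal a e P1), (scal a e P2); split; first exact: Rg_scal.
split; first exact: Rg_scal.
by move=> c e'; rewrite -scal_cat !coef_scal H3.
Qed.

Lemma Msum_popp p L (G1 G2 : Poly p -> Prop) P :
  (forall P, ZPterm P -> G1 P) -> (forall P, ZPterm P -> G2 P) ->
  Msum L G1 G2 P -> Msum L G1 G2 (popp P).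
Proof. by move=> HZ1 HZ2 H; rewrite popp_scal; apply: Msum_scal. Qed.

Lemma Msum_l p L (G1 G2 : Poly p -> Prop) P :
  (forall P, ZPterm P -> G2 P) -> Rg L G1 P -> Msum L G1 G2 P.
Proof.
move=> HZ H; exists P, [::]; split => //; split; first exact: Rg_nil.
by move=> c e; rewrite cats0.
Qed.

Lemma Msum_r p L (G1 G2 : Poly p -> Prop) P :
  (forall P, ZPterm P -> G1 P) -> Rg L G2 P -> Msum L G1 G2 P.
Proof. by move=> HZ H; exists [::], P; split; first exact: Rg_nil. Qed.

Lemma Msum_nil p L (G1 G2 : Poly p -> Prop) :
  (forall P, ZPterm P -> G1 P) -> (forall P, ZPterm P -> G2 P) -> Msum L G1 G2 [::].
Proof. by move=> HZ1 HZ2; apply: Msum_l => //; apply: Rg_nil. Qed.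

Lemma Msum_mulr p L (G1 G2 : Poly p -> Prop) P X :
  Rg L G1 X -> Rg L G2 X -> Msum L G1 G2 P -> Msum L G1 G2 (pmul L P X).
Proof.
move=> HX1 HX2 [P1 [P2 [H1 [H2 H3]]]].
exists (pmul L P1 X), (pmul L P2 X); split; first exact: Rg_mul.
split; first exact: Rg_mul.
by move=> c e; rewrite -pmul_catl; apply: pmul_cong.
Qed.
Lemma lam_sum p (L : 'M[int]_(2+p)) (c v : expv p) :
  lam L c v = \sum_i c 0 i * \sum_j L i j * v 0 j.
Proof.
rewrite /lam -mulmxA mxE; apply: eq_bigr => i _; rewrite mxE; congr (_ * _).
by apply: eq_bigr => j _; rewrite mxE.
Qed.

Lemma seed_skew p L B d h : @quantum_seed p L B d h -> L^T = - L.
Proof. by case. Qed.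

Lemma seed_d p L B d h : @quantum_seed p L B d h -> forall k, (0 < d k)%N.
Proof. by case. Qed.

Lemma seed_h p L B d h : @quantum_seed p L B d h -> forall k,
  lpcoef (h k 0%N) = lpcoef [:: (1, 0)] /\ lpcoef (h k (d k)) = lpcoef [:: (1, 0)].
Proof. by case=> _ _ _ _ H k; case: (H k). Qed.

Lemma seed_LB p L B d h : @quantum_seed p L B d h ->
  exists dt : 'I_2 -> int, (forall k, 0 < dt k) /\
    forall j k, (L *m B) j k = if j == mut p k then - dt k else 0.
Proof.
case=> _ [dt [Hdt HLB]] _ _ _; exists dt; split => // j k.
rewrite HLB mxE -[j]splitK; case: (split j) => i /=.
- rewrite col_mxEu mxE /mut (inj_eq (@lshift_inj _ _)) mxE.
  by case: (i =P k) => [->|_]; rewrite ?eqxx ?mulr1n // mulr0n oppr0.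
- rewrite col_mxEd mxE oppr0; case: eqP => // /(congr1 val) /= Ek.
  by exfalso; have := ltn_ord k; rewrite -Ek; lia.
Qed.

Lemma seed_Bkk p L B d h : @quantum_seed p L B d h -> forall k, B (mut p k) k = 0.
Proof.
move=> Hq k; have [dt [Hdt HLB]] := seed_LB Hq.
pose v : expv p := \row_j B j k.
have H0 : lam L v v = 0.
  have := lam_skew v v (seed_skew Hq). lia.
move: H0; rewrite lam_sum.
have -> : \sum_i v 0 i * \sum_j L i j * v 0 j = \sum_i (if i == mut p k then B i k * - dt k else 0).
  apply: eq_bigr => i _. rewrite !mxE.
  have -> : \sum_j L i j * v 0 j = (L *m B) i k by rewrite mxE; apply: eq_bigr => j _; rewrite mxE.
  by rewrite HLB; case: ifP; rewrite ?mulr0.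
rewrite -big_mkcond big_pred1_eq. have := Hdt k. nia.
Qed.

Lemma seed_beta p L B d h : @quantum_seed p L B d h ->
  forall k j, beta B d k j * (d k)%:Z = B j k.
Proof. by case=> _ _ _ Hdv _ k j; rewrite /beta divzK. Qed.

Lemma seed_Lbeta p L B d h : @quantum_seed p L B d h ->
  forall k i, i != mut p k -> \sum_j L i j * beta B d k j = 0.
Proof.
move=> Hq k i Hi; have [dt [Hdt HLB]] := seed_LB Hq.
have Hd := seed_d Hq k.
have : (\sum_j L i j * beta B d k j) * (d k)%:Z = 0.
  rewrite big_distrl /=.
  have -> : \sum_j L i j * beta B d k j * (d k)%:Z = (L *m B) i k.
    by rewrite mxE; apply: eq_bigr => j _; rewrite -mulrA (seed_beta Hq).
  by rewrite HLB (negbTE Hi).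
move=> H; apply/eqP; move: H => /eqP; rewrite mulf_eq0 => /orP [] // /eqP.
move=> H; exfalso; move: Hd H; lia.
Qed.
Lemma maxpn (x : int) : Num.max x 0 - Num.max (-x) 0 = x.
Proof. lia. Qed.

Lemma mutexp_lin p (B : 'M[int]_(2 + p, 2)) d k r j : (r <= d k)%N ->
  mutexp B d k r 0 j = mutexp B d k 0 0 j + r%:Z * beta B d k j.
Proof.
move=> Hr; rewrite !mxE subn0 -subzn //.
rewrite -[X in _ = _ + _ * X](maxpn (beta B d k j)). ring.
Qed.

Lemma mut_inj p : injective (mut p).
Proof. by move=> i j; rewrite /mut; apply: lshift_inj. Qed.

Lemma mutexp_self p L B d h : @quantum_seed p L B d h -> forall k r,
  mutexp B d k r 0 (mut p k) = -1.
Proof.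
move=> Hq k r; rewrite !mxE eqxx /beta (seed_Bkk Hq) div0z.
by rewrite oppr0 maxxx mulr0 mulr0 add0r.
Qed.

Lemma mutexp_other p B d k k' r : k' != k -> (r <= d k)%N ->
  mutexp B d k r 0 (mut p k') =
  r%:Z * Num.max (beta B d k (mut p k')) 0 + (d k - r)%:Z * Num.max (- beta B d k (mut p k')) 0.
Proof.
move=> Hk Hr; rewrite !mxE (inj_eq (@mut_inj p)) (negbTE Hk). by rewrite subr0.
Qed.

Lemma mutexp_other_ge0 p B d k k' r : k' != k -> (r <= d k)%N ->
  0 <= mutexp B d k r 0 (mut p k').
Proof.
move=> Hk Hr; rewrite mutexp_other //.
set x := beta _ _ _ _. have : 0 <= r%:Z by []. have : 0 <= (d k - r)%:Z by [].
nia.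
Qed.

Lemma lam_mutexp_const p L B d h : @quantum_seed p L B d h -> forall k (c : expv p) r,
  c 0 (mut p k) = 0 -> (r <= d k)%N ->
  lam L c (mutexp B d k r) = lam L c (mutexp B d k 0).
Proof.
move=> Hq k c r Hc Hr; rewrite !lam_sum; apply: eq_bigr => i _.
case: (i =P mut p k) => [->|Hi]; first by rewrite Hc !mul0r.
congr (_ * _). under eq_bigr => j _ do rewrite (@mutexp_lin p B d k r j Hr) mulrDr.
rewrite big_split /=.
have -> : \sum_j L i j * (r%:Z * beta B d k j) = r%:Z * \sum_j L i j * beta B d k j.
  by rewrite big_distrr; apply: eq_bigr => j _; rewrite mulrCA.
rewrite (seed_Lbeta Hq) ?mulr0 ?addr0 //. exact/eqP.
Qed.
Lemma mem_Xprime p B d h k (v : (int * int) * expv p) :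
  v \in Xprime B d h k -> exists2 r, (r <= d k)%N & v.2 = mutexp B d k r.
Proof.
move/flattenP => [s /mapP [r Hr ->] /mapP [u _ ->]]. exists r => //.
by move: Hr; rewrite mem_iota add0n ltnS.
Qed.

Lemma pmul_singler p L (P : Poly p) x : pmul L P [:: x] = map (fm L ^~ x) P.
Proof. by elim: P => //= u P IH; rewrite pmul_cons IH. Qed.

Lemma pmul_singlel p L (R : Poly p) x : pmul L [:: x] R = map (fm L x) R.
Proof. by rewrite pmul_cons cats0. Qed.

Lemma pmul_consl p L (W R : Poly p) w : pmul L (w :: W) R = pmul L [:: w] R ++ pmul L W R.
Proof. by rewrite !pmul_cons cats0. Qed.

Lemma comm_Xmon_X1' p L B d h : @quantum_seed p L B d h -> forall c : expv p,
  c 0 (mut p 0) = 0 ->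
  pmul L (Xmon c) (Xprime B d h 0) =
  scal 1 (2%:Z * lam L c (mutexp B d 0 0)) (pmul L (Xprime B d h 0) (Xmon c)).
Proof.
move=> Hq c Hc; rewrite pmul_singlel /Xmon pmul_singler /scal -map_comp.
apply/eq_in_map => v /mem_Xprime [r Hr Hv] /=.
rewrite /fm /= Hv mul1r mulr1 (addrC c).
rewrite [lam L (mutexp _ _ _ _) c](lam_skew _ _ (seed_skew Hq)).
rewrite (lam_mutexp_const Hq Hc Hr). congr (_, _, _); ring.
Qed.

Definition pw p L (X : Poly p) b := iter b (fun P => pmul L P X) (Xmon 0).

Lemma pw0 p L (X : Poly p) : pw L X 0 = Xmon 0.
Proof. by []. Qed.

Lemma pwS p L (X : Poly p) b : pw L X b.+1 = pmul L (pw L X b) X.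
Proof. by []. Qed.

Lemma pw_comm p L (X : Poly p) b : pmul L X (pw L X b) = pmul L (pw L X b) X.
Proof.
elim: b => [|b IH]; first by rewrite pw0 pmul_Xmon0l pmul_Xmon0r.
by rewrite pwS -pmul_assoc IH.
Qed.

Lemma pw_commute_mon p L (X : Poly p) (c : expv p) K b :
  pmul L (Xmon c) X = scal 1 K (pmul L X (Xmon c)) ->
  pmul L (Xmon c) (pw L X b) = scal 1 (b%:Z * K) (pmul L (pw L X b) (Xmon c)).
Proof.
move=> H; elim: b => [|b IH].
  by rewrite pw0 pmul_Xmon0r pmul_Xmon0l mul0r scal10.
rewrite pwS -pmul_assoc IH scal_pmul_l !pmul_assoc H scal_pmul_r scal_scal.
rewrite -pmul_assoc mulr1; congr scal; lia.
Qed.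
Lemma Rg_Xmon_add p L (G : Poly p -> Prop) (c d : expv p) :
  (forall P, ZPterm P -> G P) -> Rg L G (Xmon c) -> Rg L G (Xmon d) -> Rg L G (Xmon (c + d)).
Proof.
move=> HZ H1 H2; have := Rg_mul H1 H2; rewrite pmul_Xmon => H.
have := Rg_scal 1 (- lam L c d) HZ H. by rewrite scal_scal mulr1 addNr scal10.
Qed.

Lemma Rg_Xmon_nat p L (G : Poly p -> Prop) (z e : expv p) :
  (forall P, ZPterm P -> G P) -> Rg L G (Xmon z) -> Rg L G (Xmon e) ->
  forall n : nat, Rg L G (Xmon (z + n%:Z *: e)).
Proof.
move=> HZ Hz He; elim => [|n IH]; first by rewrite scale0r addr0.
rewrite intS scalerDl scale1r (addrC e) addrA. exact: Rg_Xmon_add.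
Qed.

Lemma ev_entry p (i j : 'I_(2 + p)) : ev i 0 j = if j == i then 1 else 0.
Proof. by rewrite mxE. Qed.

Lemma mut01 p : mut p 0 != mut p 1.
Proof. by rewrite (inj_eq (@mut_inj p)). Qed.

Lemma I2_cases (k : 'I_2) : k = 0 \/ k = 1.
Proof. by case: k => [[|[|k]]] Hk; [left; apply/val_inj | right; apply/val_inj | ]. Qed.

Lemma nonneg_nat (x : int) : 0 <= x -> exists n : nat, x = n%:Z.
Proof. by move=> H; exists `|x|%N; rewrite gez0_abs. Qed.

Lemma Rg_Xmon p L (G : Poly p -> Prop) (c : expv p) :
  (forall P, ZPterm P -> G P) -> G (Xmon (ev (mut p 0))) -> G (Xmon (ev (mut p 1))) ->
  (0 <= c 0 (mut p 1) \/ G (Xmon (- ev (mut p 1)))) -> 0 <= c 0 (mut p 0) ->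
  Rg L G (Xmon c).
Proof.
move=> HZ H1 H2 H3 H0.
pose zr : expv p := \row_j (if (j == mut p 0) || (j == mut p 1) then 0 else c 0 j).
have Hc : c = zr + c 0 (mut p 0) *: ev (mut p 0) + c 0 (mut p 1) *: ev (mut p 1).
  apply/rowP => j; rewrite !mxE.
  have Hne := mut01 p.
  have [->|Hj0] := eqVneq j (mut p 0).
    by rewrite /=; lia.
  have [->|Hj1] := eqVneq j (mut p 1).
    by rewrite /= ?orbT; lia.
  by rewrite /=; lia.
have Hz : Rg L G (Xmon zr).
  apply: Rg_base; apply: HZ; exists 1, 0, zr; split => // k; rewrite mxE.
  by case: (I2_cases k) => ->; rewrite eqxx ?orbT.
have [n0 En0] := nonneg_nat H0.
have Hz0 : Rg L G (Xmon (zr + c 0 (mut p 0) *: ev (mut p 0))).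
  by rewrite En0; apply: Rg_Xmon_nat => //; apply: Rg_base.
rewrite Hc. case: (lerP 0 (c 0 (mut p 1))) => Hc1.
  have [n1 En1] := nonneg_nat Hc1.
  by rewrite En1; apply: Rg_Xmon_nat => //; apply: Rg_base.
case: H3 => [H3|H3]; first by exfalso; move: H3 Hc1; lia.
pose c1 := c 0 (mut p 1).
have [n1 En1] : exists n : nat, c1 = - n%:Z.
  by exists `|c1|%N; rewrite ltz0_abs // opprK.
move: En1; rewrite /c1 => En1.
rewrite En1 scaleNr -scalerN. by apply: Rg_Xmon_nat => //; apply: Rg_base.
Qed.

Lemma Rg_list p L (G : Poly p -> Prop) (W : Poly p) :
  (forall P, ZPterm P -> G P) -> (forall w, w \in W -> Rg L G [:: w]) -> Rg L G W.
Proof.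
move=> HZ; elim: W => [|w W IH] H; first exact: Rg_nil.
rewrite -cat1s; apply: Rg_cat; first by apply: H; rewrite inE eqxx.
by apply: IH => v Hv; apply: H; rewrite inE Hv orbT.
Qed.

Lemma Rg_X2' p L B d h (G : Poly p -> Prop) :
  (forall P, ZPterm P -> G P) -> G (Xmon (ev (mut p 0))) -> G (Xmon (ev (mut p 1))) ->
  G (Xmon (- ev (mut p 1))) -> Rg L G (Xprime B d h 1).
Proof.
move=> HZ H1 H2 H3; apply: Rg_list => // -[[a e] c] /mem_Xprime [r Hr /= ->].
rewrite single_scal; apply: Rg_scal => //; apply: Rg_Xmon => //; first by right.
by apply: mutexp_other_ge0.
Qed.

Lemma Rg_pw p L (G : Poly p -> Prop) X b :
  (forall P, ZPterm P -> G P) -> G X -> Rg L G (pw L X b).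
Proof.
move=> HZ HX; elim: b => [|b IH].
  by rewrite pw0; apply: Rg_base; apply: HZ; apply: ZPterm_scalar.
by rewrite pwS; apply: Rg_mul => //; apply: Rg_base.
Qed.
Definition Qm p L (X : Poly p) b c := pmul L (pw L X b) (Xmon c).

Lemma L1 p L (X : Poly p) (G1 G2 : Poly p -> Prop) (Pc : expv p -> Prop) b :
  (forall P, ZPterm P -> G1 P) -> (forall P, ZPterm P -> G2 P) ->
  (forall c, Pc c -> Msum L G1 G2 (Qm L X b c)) ->
  forall W, (forall w, w \in W -> Pc w.2) -> Msum L G1 G2 (pmul L (pw L X b) W).
Proof.
move=> HZ1 HZ2 HQ; elim => [|w W IH] HW; first by rewrite pmul_nilr; apply: Msum_nil.
apply: (Msum_perm (P := pmul L (pw L X b) [:: w] ++ pmul L (pw L X b) W)).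
  apply: Msum_cat; last by apply: IH => v Hv; apply: HW; rewrite inE Hv orbT.
  case: w HW => [[a e] c] HW; rewrite single_scal scal_pmul_r.
  apply: Msum_scal => //; apply: HQ; exact: (HW (a, e, c) (mem_head _ _)).
by rewrite perm_sym -cat1s perm_pmul_catr.
Qed.

Lemma stepA p L B d h (G1 G2 : Poly p -> Prop) b :
  @quantum_seed p L B d h ->
  (forall P, ZPterm P -> G1 P) -> (forall P, ZPterm P -> G2 P) ->
  (forall c : expv p, 0 <= c 0 (mut p 0) -> Msum L G1 G2 (Qm L (Xprime B d h 0) b c)) ->
  forall c : expv p, 1 <= c 0 (mut p 0) -> Msum L G1 G2 (Qm L (Xprime B d h 0) b.+1 c).
Proof.
move=> Hq HZ1 HZ2 IH c Hc.
pose c' := c - ev (mut p 0).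
have Ec : ev (mut p 0) + c' = c by rewrite /c' addrC subrK.
have E : Xmon c = scal 1 (- lam L (ev (mut p 0)) c') (pmul L (Xmon (ev (mut p 0))) (Xmon c')).
  by rewrite pmul_Xmon scal_scal mulr1 addNr scal10 Ec.
rewrite /Qm E scal_pmul_r pwS !pmul_assoc -(pmul_assoc L (Xprime B d h 0)).
apply: Msum_scal => //. apply: (L1 (Pc := fun c => 0 <= c 0 (mut p 0))) => //.
rewrite /Xmon !pmul_singler => w /mapP [w' /mapP [v Hv ->] ->] /=.
have [r Hr Ev] := mem_Xprime Hv.
have Hm := mutexp_self Hq 0 r.
rewrite /fm /= Ev; set m := mutexp B d 0 r; rewrite !mxE eqxx.
have Hb : beta B d 0 (mut p 0) = 0 by rewrite /beta (seed_Bkk Hq) div0z.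
by rewrite Hb oppr0 maxxx !mulr0 !add0r subr_ge0.
Qed.
Definition s0 p (B : 'M[int]_(2 + p, 2)) d := beta B d 1 (mut p 0).
Definition r0 p (B : 'M[int]_(2 + p, 2)) d : nat := if (0 < s0 B d)%R then 0%N else d 1%R.

Lemma s0_neq0 p L B d h : @quantum_seed p L B d h -> B (mut p 0) 1 != 0 -> s0 B d != 0.
Proof.
move=> Hq HB; apply/eqP => Hs; move: HB; rewrite -(seed_beta Hq) -/(s0 B d) Hs mul0r.
by rewrite eqxx.
Qed.

Lemma r0_le p (B : 'M[int]_(2 + p, 2)) d : (r0 B d <= d 1%R)%N.
Proof. by rewrite /r0; case: ifP. Qed.

Lemma mutexp1_zero p L B d h r : @quantum_seed p L B d h -> B (mut p 0) 1 != 0 ->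
  (r <= d 1%R)%N -> (mutexp B d 1 r 0 (mut p 0) == 0) = (r == r0 B d).
Proof.
move=> Hq HB Hr; have Hs := s0_neq0 Hq HB.
rewrite mutexp_other // -/(s0 B d) /r0.
case: (ltrP 0 (s0 B d)) => Hs0.
  have -> : Num.max (- s0 B d) 0 = 0 by apply/max_idPr; rewrite oppr_le0 ltW.
  rewrite mulr0 addr0 mulf_eq0 (negbTE Hs) orbF. by case: r Hr.
have -> : Num.max (- s0 B d) 0 = - s0 B d by apply/max_idPl; rewrite oppr_ge0.
rewrite mulr0 add0r mulf_eq0 oppr_eq0 (negbTE Hs) orbF.
apply/eqP/eqP => [H|->]; last by rewrite subnn.
have : (d 1%R - r)%N = 0%N by move: H => /(congr1 absz).
move/eqP; rewrite subn_eq0 => H1. by apply/eqP; rewrite eqn_leq H1 Hr.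
Qed.

Definition zz p (B : 'M[int]_(2 + p, 2)) d := mutexp B d 1 (r0 B d).

Lemma zz_0 p L B d h : @quantum_seed p L B d h -> B (mut p 0) 1 != 0 ->
  zz B d 0 (mut p 0) = 0.
Proof. by move=> Hq HB; apply/eqP; rewrite /zz (mutexp1_zero Hq HB (r0_le B d)). Qed.

Lemma zz_1 p L B d h : @quantum_seed p L B d h -> zz B d 0 (mut p 1) = -1.
Proof. by move=> Hq; rewrite /zz (mutexp_self Hq). Qed.

Definition Rest p (B : 'M[int]_(2 + p, 2)) d h :=
  filter (fun u : (int * int) * expv p => u.2 0 (mut p 0) != 0) (Xprime B d h 1).

Lemma coef_zz p L B d h : @quantum_seed p L B d h -> B (mut p 0) 1 != 0 ->
  forall c e, coef (Xmon (zz B d)) c e = coef (Xprime B d h 1 ++ popp (Rest B d h)) c e.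
Proof.
move=> Hq HB c e.
rewrite coef_cat coef_popp /Rest.
rewrite -(coef_perm c e (introT permPl (perm_filterC (fun u : (int * int) * expv p => u.2 0 (mut p 0) != 0) (Xprime B d h 1)))).
rewrite coef_cat addrAC addrN add0r.
rewrite [in RHS]/coef big_filter_cond /Xprime big_flatten big_map.
have Hmem : r0 B d \in iota 0 (d 1%R).+1 by rewrite mem_iota add0n ltnS r0_le.
rewrite (bigD1_seq _ Hmem (iota_uniq _ _)).
rewrite [X in _ = _ + X]big1_seq ?addr0; last first.
  move=> r /andP [Hr0 Hr]; rewrite big_map big1 // => u /andP [Hu _].
  move: Hr; rewrite mem_iota add0n ltnS => Hr.
  exfalso; move: Hu; rewrite /= negbK (mutexp1_zero Hq HB Hr). by rewrite (negbTE Hr0).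
rewrite big_map /= -/(zz B d) negbK (zz_0 Hq HB) eqxx /=.
rewrite coef_Xmon. case: (zz B d =P c) => [_|_] /=; last by rewrite big1.
have [H0 Hd] := seed_h Hq 1.
have Hl : lpcoef (h 1 (r0 B d)) = lpcoef [:: (1, 0)] by rewrite /r0; case: ifP.
move: (congr1 (fun f => f e) Hl); rewrite /lpcoef => ->.
by rewrite big_cons big_nil /=; case: ifP; rewrite ?addr0.
Qed.
Lemma row_sub_entry p (c z : expv p) i : (c - z) 0 i = c 0 i - z 0 i.
Proof. by rewrite !mxE. Qed.
Lemma row_add_entry p (c z : expv p) i : (c + z) 0 i = c 0 i + z 0 i.
Proof. by rewrite !mxE. Qed.

Lemma Rg1_Qm p L B d h (G1 : Poly p -> Prop) b (c : expv p) :
  (forall P, ZPterm P -> G1 P) -> G1 (Xmon (ev (mut p 0))) -> G1 (Xprime B d h 0) ->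
  G1 (Xmon (ev (mut p 1))) -> 0 <= c 0 (mut p 0) -> 0 <= c 0 (mut p 1) ->
  Rg L G1 (Qm L (Xprime B d h 0) b c).
Proof.
move=> HZ H1 H1' H2 Hc0 Hc1; apply: Rg_mul; first exact: Rg_pw.
by apply: Rg_Xmon => //; left.
Qed.

Lemma stepB p L B d h (G1 G2 : Poly p -> Prop) b :
  @quantum_seed p L B d h -> B (mut p 0) 1 != 0 ->
  (forall P, ZPterm P -> G1 P) -> G1 (Xmon (ev (mut p 0))) -> G1 (Xprime B d h 0) ->
  G1 (Xmon (ev (mut p 1))) -> G1 (Xprime B d h 1) ->
  (forall P, ZPterm P -> G2 P) -> G2 (Xmon (ev (mut p 0))) -> G2 (Xmon (ev (mut p 1))) ->
  G2 (Xmon (- ev (mut p 1))) ->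
  (forall c : expv p, 0 <= c 0 (mut p 0) -> Msum L G1 G2 (Qm L (Xprime B d h 0) b c)) ->
  forall (k : nat) (c : expv p), c 0 (mut p 0) = 0 -> - k%:Z <= c 0 (mut p 1) ->
  Msum L G1 G2 (Qm L (Xprime B d h 0) b.+1 c).
Proof.
move=> Hq HB HZ1 H11 H11' H12 H12' HZ2 H21 H22 H22i IH.
have HA := stepA Hq HZ1 HZ2 IH.
elim => [|k IHk] c Hc0 Hc1.
  apply: Msum_l => //; apply: Rg1_Qm => //; first by rewrite Hc0.
case: (lerP 0 (c 0 (mut p 1))) => Hneg.
  by apply: Msum_l => //; apply: Rg1_Qm => //; rewrite Hc0.
pose z := zz B d; pose c'' := c - z.
have Hz0 : z 0 (mut p 0) = 0 by apply: zz_0 Hq HB.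
have Hz1 : z 0 (mut p 1) = -1 by apply: zz_1 Hq.
have Hc''0 : c'' 0 (mut p 0) = 0 by rewrite row_sub_entry Hc0 Hz0 subrr.
have Hc''1 : - k%:Z <= c'' 0 (mut p 1).
  rewrite row_sub_entry Hz1 opprK. move: Hc1. lia.
have Ec : c'' + z = c by rewrite /c'' subrK.
have E : Xmon c = scal 1 (- lam L c'' z) (pmul L (Xmon c'') (Xmon z)).
  by rewrite pmul_Xmon scal_scal mulr1 addNr scal10 Ec.
rewrite /Qm E scal_pmul_r; apply: Msum_scal => //.
set PW := pw L (Xprime B d h 0) b.+1.
apply: (Msum_coef (P := pmul L PW (pmul L (Xmon c'') (Xprime B d h 1)) ++
                        popp (pmul L PW (pmul L (Xmon c'') (Rest B d h))))).
  apply: Msum_cat.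
    rewrite -pmul_assoc; apply: Msum_mulr; first exact: Rg_base.
      exact: Rg_X2'.
    exact: IHk.
  apply: Msum_popp => //.
  apply: (L1 (Pc := fun c : expv p => 1 <= c 0 (mut p 0))) => //.
  rewrite pmul_singlel => w /mapP [v Hv ->] /=.
  move: Hv; rewrite mem_filter => /andP [Hv0 Hv].
  have [r Hr Ev] := mem_Xprime Hv.
  have Hge := @mutexp_other_ge0 p B d 1 0 r isT Hr.
  rewrite /fm /= row_add_entry Hc''0 add0r.
  move: Hv0 Hge; rewrite Ev. set x := mutexp B d 1 r 0 (mut p 0). lia.
move=> c1 e1.
have HB2 : forall c e, coef (pmul L (Xmon c'') (Xmon z)) c e =
   coef (pmul L (Xmon c'') (Xprime B d h 1 ++ popp (Rest B d h))) c e.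
  by apply: pmul_cong => c2 e2 //; exact: (coef_zz Hq HB c2 e2).
rewrite (@pmul_cong p L PW PW _ _ (fun _ _ => erefl) HB2).
rewrite (coef_perm _ _ (perm_pmulr _ _ (perm_pmul_catr _ _ _ _))).
rewrite (coef_perm _ _ (perm_pmul_catr _ _ _ _)).
by rewrite pmul_poppr pmul_poppr.
Qed.
Lemma neg_abs_le (x : int) : - (absz x)%:Z <= x.
Proof. rewrite abszE; lia. Qed.

Lemma Kall p L B d h (G1 G2 : Poly p -> Prop) :
  @quantum_seed p L B d h -> B (mut p 0) 1 != 0 ->
  (forall P, ZPterm P -> G1 P) -> G1 (Xmon (ev (mut p 0))) -> G1 (Xprime B d h 0) ->
  G1 (Xmon (ev (mut p 1))) -> G1 (Xprime B d h 1) ->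
  (forall P, ZPterm P -> G2 P) -> G2 (Xmon (ev (mut p 0))) -> G2 (Xmon (ev (mut p 1))) ->
  G2 (Xmon (- ev (mut p 1))) ->
  forall b (c : expv p), 0 <= c 0 (mut p 0) -> Msum L G1 G2 (Qm L (Xprime B d h 0) b c).
Proof.
move=> Hq HB HZ1 H11 H11' H12 H12' HZ2 H21 H22 H22i.
elim => [|b IHb] c Hc.
  rewrite /Qm pw0 pmul_Xmon0l; apply: Msum_r => //.
  by apply: Rg_Xmon => //; right.
case: (lerP 1 (c 0 (mut p 0))) => H1; first exact: (stepA Hq HZ1 HZ2 IHb).
move/(_ (absz (c 0 (mut p 1)))) : (stepB Hq HB HZ1 H11 H11' H12 H12' HZ2 H21 H22 H22i IHb).
apply.
  move: Hc H1; set x := c 0 (mut p 0). lia.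
exact: neg_abs_le.
Qed.

Inductive Sp p (L : 'M[int]_(2 + p)) (X : Poly p) : Poly p -> Prop :=
| sp_Q a e b (c : expv p) : 0 <= c 0 (mut p 0) -> Sp L X (scal a e (Qm L X b c))
| sp_nil : Sp L X [::]
| sp_cat A A' : Sp L X A -> Sp L X A' -> Sp L X (A ++ A')
| sp_perm A A' : Sp L X A -> perm_eq A A' -> Sp L X A'.

Lemma Sp_scal p L (X : Poly p) a e A : Sp L X A -> Sp L X (scal a e A).
Proof.
elim => [a' e' b c Hc | | A1 A2 _ IH1 _ IH2 | A1 A2 _ IH Hp].
- by rewrite scal_scal; apply: sp_Q.
- exact: sp_nil.
- by rewrite scal_cat; apply: sp_cat.
- by apply: (sp_perm IH); apply: perm_map.
Qed.

Lemma Sp_Msum p L B d h (G1 G2 : Poly p -> Prop) :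
  @quantum_seed p L B d h -> B (mut p 0) 1 != 0 ->
  (forall P, ZPterm P -> G1 P) -> G1 (Xmon (ev (mut p 0))) -> G1 (Xprime B d h 0) ->
  G1 (Xmon (ev (mut p 1))) -> G1 (Xprime B d h 1) ->
  (forall P, ZPterm P -> G2 P) -> G2 (Xmon (ev (mut p 0))) -> G2 (Xmon (ev (mut p 1))) ->
  G2 (Xmon (- ev (mut p 1))) ->
  forall A, Sp L (Xprime B d h 0) A -> Msum L G1 G2 A.
Proof.
move=> Hq HB HZ1 H11 H11' H12 H12' HZ2 H21 H22 H22i A.
elim => [a e b c Hc | | A1 A2 _ IH1 _ IH2 | A1 A2 _ IH Hp].
- by apply: Msum_scal => //; apply: (Kall Hq HB).
- exact: (Msum_nil L HZ1 HZ2).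
- exact: Msum_cat.
- exact: Msum_perm IH Hp.
Qed.

Lemma Sp_left p L (X g : Poly p) :
  (forall b (c : expv p), 0 <= c 0 (mut p 0) -> Sp L X (pmul L g (Qm L X b c))) ->
  forall S, Sp L X S -> Sp L X (pmul L g S).
Proof.
move=> H S; elim => [a e b c Hc | | A1 A2 _ IH1 _ IH2 | A1 A2 _ IH Hp].
- by rewrite scal_pmul_r; apply: Sp_scal; apply: H.
- by rewrite pmul_nilr; apply: sp_nil.
- apply: (sp_perm (sp_cat IH1 IH2)); by rewrite perm_sym perm_pmul_catr.
- by apply: (sp_perm IH); apply: perm_pmulr.
Qed.

Lemma Sp_Xmon p L B d h (z : expv p) : @quantum_seed p L B d h -> z 0 (mut p 0) = 0 ->
  forall b (c : expv p), 0 <= c 0 (mut p 0) ->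
  Sp L (Xprime B d h 0) (pmul L (Xmon z) (Qm L (Xprime B d h 0) b c)).
Proof.
move=> Hq Hz b c Hc; rewrite /Qm -pmul_assoc.
rewrite (pw_commute_mon b (comm_Xmon_X1' Hq Hz)) scal_pmul_l pmul_assoc pmul_Xmon scal_pmul_r.
apply: Sp_scal; apply: Sp_scal; rewrite -[pmul _ _ _]scal10; apply: sp_Q.
by rewrite row_add_entry Hz add0r.
Qed.

Lemma Sp_listW p L B d h : @quantum_seed p L B d h ->
  forall W : Poly p, (forall w, w \in W -> w.2 0 (mut p 0) = 0) ->
  forall b (c : expv p), 0 <= c 0 (mut p 0) ->
  Sp L (Xprime B d h 0) (pmul L W (Qm L (Xprime B d h 0) b c)).
Proof.
move=> Hq; elim => [|w W IH] HW b c Hc; first exact: sp_nil.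
rewrite pmul_consl; apply: sp_cat; last first.
  by apply: IH => // v Hv; apply: HW; rewrite inE Hv orbT.
case: w HW => [[a e] z] HW; rewrite single_scal scal_pmul_l; apply: Sp_scal.
apply: Sp_Xmon => //. exact: (HW (a, e, z) (mem_head _ _)).
Qed.
Lemma row_opp_entry p (c : expv p) i : (- c) 0 i = - c 0 i.
Proof. by rewrite !mxE. Qed.

Lemma Sp_X1 p L B d h : @quantum_seed p L B d h ->
  forall b (c : expv p), 0 <= c 0 (mut p 0) ->
  Sp L (Xprime B d h 0) (pmul L (Xmon (ev (mut p 0))) (Qm L (Xprime B d h 0) b c)).
Proof.
move=> Hq [|b] c Hc.
  rewrite /Qm pw0 pmul_Xmon0l pmul_Xmon; apply: Sp_scal.
  have -> : Xmon (ev (mut p 0) + c) = scal 1 0 (Qm L (Xprime B d h 0) 0 (ev (mut p 0) + c)).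
    by rewrite /Qm pw0 pmul_Xmon0l scal10.
  apply: sp_Q. rewrite row_add_entry ev_entry eqxx. by apply: addr_ge0.
rewrite /Qm pwS -pw_comm pmul_assoc -pmul_assoc. apply: Sp_listW => //.
rewrite pmul_singlel => w /mapP [v Hv ->] /=.
have [r Hr Ev] := mem_Xprime Hv.
by rewrite /fm /= Ev row_add_entry ev_entry eqxx (mutexp_self Hq) addrN.
Qed.

Lemma Sp_X1' p L B d h :
  forall b (c : expv p), 0 <= c 0 (mut p 0) ->
  Sp L (Xprime B d h 0) (pmul L (Xprime B d h 0) (Qm L (Xprime B d h 0) b c)).
Proof.
move=> b c Hc; rewrite /Qm -pmul_assoc pw_comm -pwS.
by rewrite -[pmul _ (pw _ _ b.+1) _]scal10; apply: sp_Q.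
Qed.

Lemma gen_Sp p L B d h : @quantum_seed p L B d h ->
  forall P, gen L (fun P => ZPterm P \/ P = Xmon (ev (mut p 0)) \/ P = Xprime B d h 0 \/
                     P = Xmon (ev (mut p 1)) \/ P = Xmon (- ev (mut p 1))) P ->
  forall S, Sp L (Xprime B d h 0) S -> Sp L (Xprime B d h 0) (pmul L P S).
Proof.
move=> Hq P; elim => [{}P HP | P1 P2 _ IH1 _ IH2 | P1 _ IH1 | P1 P2 _ IH1 _ IH2] S HS.
- apply: Sp_left HS => b c Hc.
  case: HP => [[a [e [z [-> Hz]]]] | [-> | [-> | [-> | ->]]]].
  + rewrite single_scal scal_pmul_l; apply: Sp_scal; exact: Sp_Xmon.
  + exact: Sp_X1.
  + exact: Sp_X1'.
  + apply: Sp_Xmon => //. by rewrite ev_entry (negbTE (mut01 p)).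
  + apply: Sp_Xmon => //. by rewrite row_opp_entry ev_entry (negbTE (mut01 p)) oppr0.
- rewrite /padd pmul_catl; apply: sp_cat; [exact: IH1 | exact: IH2].
- rewrite pmul_poppl popp_scal; apply: Sp_scal; exact: IH1.
- rewrite pmul_assoc; apply: IH1; exact: IH2.
Qed.

Lemma gen_Rg p L (G G' : Poly p -> Prop) P :
  (forall P, G P -> Rg L G' P) -> gen L G P -> Rg L G' P.
Proof.
move=> H; elim => [{}P HP | P1 P2 _ IH1 _ IH2 | P1 _ IH1 | P1 P2 _ IH1 _ IH2].
- exact: H.
- exact: Rg_cat.
- exact: Rg_popp.
- exact: Rg_mul.
Qed.

Theorem lemma4p4 (p : nat) (L : 'M[int]_(2 + p)) (B : 'M[int]_(2 + p, 2))
  (d : 'I_2 -> nat) (h : 'I_2 -> nat -> LP) :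
  quantum_seed L B d h ->
  B (mut p 0) 1 != 0 ->
  let X1 := Xmon (ev (mut p 0)) in
  let X2 := Xmon (ev (mut p 1)) in
  let X2inv := Xmon (- ev (mut p 1)) in
  let X1' := Xprime B d h 0 in
  let X2' := Xprime B d h 1 in
  forall f : expv p -> int -> int,
    InRing L (fun P => ZPterm P \/ P = X1 \/ P = X1' \/ P = X2 \/ P = X2inv) f
    <->
    exists f1 f2,
      InRing L (fun P => ZPterm P \/ P = X1 \/ P = X1' \/ P = X2 \/ P = X2') f1 /\
      InRing L (fun P => ZPterm P \/ P = X1 \/ P = X2 \/ P = X2inv) f2 /\
      f = (fun c e => f1 c e + f2 c e).
Proof.
move=> Hq HB; cbv zeta => f; split.
  case=> P [HP <-].
  have HS : Sp L (Xprime B d h 0) (pmul L P (Xmon 0)).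
    apply: (gen_Sp Hq HP).
    have -> : Xmon (0 : expv p) = scal 1 0 (Qm L (Xprime B d h 0) 0 0).
      by rewrite /Qm pw0 pmul_Xmon0l scal10.
    by apply: sp_Q; rewrite mxE.
  rewrite pmul_Xmon0r in HS.
  have := Sp_Msum (G1 := fun P => ZPterm P \/ P = Xmon (ev (mut p 0)) \/ P = Xprime B d h 0 \/
                     P = Xmon (ev (mut p 1)) \/ P = Xprime B d h 1)
                  (G2 := fun P => ZPterm P \/ P = Xmon (ev (mut p 0)) \/
                     P = Xmon (ev (mut p 1)) \/ P = Xmon (- ev (mut p 1))) Hq HB.
  move=> /(_ _ _ _ _ _ _ _ _ _ P HS) [].
  + by move=> Q HQ; left.
  + by right; left.
  + by right; right; left.
  + by right; right; right; left.
  + by right; right; right; right.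
  + by move=> Q HQ; left.
  + by right; left.
  + by right; right; left.
  + by right; right; right.
  move=> P1 [P2 [[Q1 [HQ1 EQ1]] [[Q2 [HQ2 EQ2]] E]]].
  exists (coef Q1), (coef Q2); split; first by exists Q1.
  split; first by exists Q2.
  apply: functional_extensionality => c; apply: functional_extensionality => e.
  by rewrite E coef_cat EQ1 EQ2.
case=> f1 [f2 [[P1 [H1 <-]] [[P2 [H2 <-]] ->]]].
have R1 : Rg L (fun P => ZPterm P \/ P = Xmon (ev (mut p 0)) \/ P = Xprime B d h 0 \/
                     P = Xmon (ev (mut p 1)) \/ P = Xmon (- ev (mut p 1))) P1.
  apply: (gen_Rg _ H1) => P [HP | [-> | [-> | [-> | ->]]]].
  - by apply: Rg_base; left.
  - by apply: Rg_base; right; left.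
  - by apply: Rg_base; right; right; left.
  - by apply: Rg_base; right; right; right; left.
  - apply: Rg_X2'.
    + by move=> Q HQ; left.
    + by right; left.
    + by right; right; right; left.
    + by right; right; right; right.
have R2 : Rg L (fun P => ZPterm P \/ P = Xmon (ev (mut p 0)) \/ P = Xprime B d h 0 \/
                     P = Xmon (ev (mut p 1)) \/ P = Xmon (- ev (mut p 1))) P2.
  apply: (gen_Rg _ H2) => P [HP | [-> | [-> | ->]]].
  - by apply: Rg_base; left.
  - by apply: Rg_base; right; left.
  - by apply: Rg_base; right; right; right; left.
  - by apply: Rg_base; right; right; right; right.
have [P [HP EP]] := Rg_cat R1 R2.
exists P; split => //.
apply: functional_extensionality => c; apply: functional_extensionality => e.
by rewrite EP coef_cat.
Qed.
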